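(* Let $v,u$ be integrable functions on $[0,\infty)$ and let $z_1,z_2,\gamma_1,\gamma_2$ be integrable functions on $[0,\infty)$ such that $$z_1(x)\le v(x)\le z_2(x)\quad\text{and}\quad \gamma_1(x)\le u(x)\le\gamma_2(x)\quad\text{for all }x\in[0,\infty).$$ Then for all $x>0$, $\alpha>0$, $\delta>0$, $\rho>0$ and $\beta,\lambda,\eta,k\in\mathbb{R}$, writing $A f=\,{}^{\rho}\mathcal{J}^{\alpha,\beta}_{\eta,k}f(x)$ and $D f=\,{}^{\rho}\mathcal{J}^{\delta,\lambda}_{\eta,k}f(x)$, the following hold: (a) $Du\,Az_2+D\gamma_1\,Av\ \ge\ D\gamma_1\,Az_2+Du\,Av$; (b) $Dz_1\,Au+A\gamma_2\,Dv\ \ge\ Dz_1\,A\gamma_2+Dv\,Au$; (c) $Az_2\,D\gamma_2+Av\,Du\ \ge\ Az_2\,Du+D\gamma_2\,Av$; (d) $Az_1\,D\gamma_1+Av\,Du\ \ge\ Az_1\,Du+D\gamma_1\,Av$.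
   Context: For a function $f$ on $[0,\infty)$, $x>0$, $\alpha>0$, $\rho>0$ and $\beta,\eta,k\in\mathbb{R}$, the generalized Katugampola fractional integral is $${}^{\rho}\mathcal{J}^{\alpha,\beta}_{\eta,k}f(x)=\frac{\rho^{1-\beta}x^{k}}{\Gamma(\alpha)}\int_0^x\frac{\tau^{\rho(\eta+1)-1}}{(x^\rho-\tau^\rho)^{1-\alpha}}f(\tau)\,d\tau,$$ defined whenever the integral exists; all such integrals appearing are assumed to exist. *)

(* Defs.v *)
From HB Require Import structures.
From mathcomp Require Import all_boot all_order all_algebra.
From mathcomp Require Import all_classical all_reals all_analysis.
Set Implicit Arguments. Unset Strict Implicit. Unset Printing Implicit Defensive.
Import Order.TTheory GRing.Theory Num.Theory.
Import numFieldNormedType.Exports.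
Local Open Scope classical_set_scope.
Local Open Scope ring_scope.

Definition Gamma (R : realType) (a : R) : R :=
  Rintegral (@lebesgue_measure R) `]0%R, +oo[
    (fun t => t `^ (a - 1) * expR (- t)).

Definition katu_integrand (R : realType) (rho alpha eta x : R) (f : R -> R)
  (tau : R) : R :=
  tau `^ (rho * (eta + 1) - 1) / (x `^ rho - tau `^ rho) `^ (1 - alpha) * f tau.

Definition katugampola (R : realType) (rho alpha beta eta k : R) (f : R -> R)
  (x : R) : R :=
  rho `^ (1 - beta) * x `^ k / Gamma alpha *
  Rintegral (@lebesgue_measure R) `]0%R, x[ (katu_integrand rho alpha eta x f).

Definition katugampola_exists (R : realType) (rho alpha eta x : R)
  (f : R -> R) : Prop :=
  (@lebesgue_measure R).-integrable `]0%R, x[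
    (EFin \o katu_integrand rho alpha eta x f).

Definition integrable_on_halfline (R : realType) (f : R -> R) : Prop :=
  (@lebesgue_measure R).-integrable `[0%R, +oo[ (EFin \o f).

(* Main.v *)
Require Import Defs.
From HB Require Import structures.
From mathcomp Require Import all_boot all_order all_algebra.
From mathcomp Require Import all_classical all_reals all_analysis.
Import Order.TTheory GRing.Theory Num.Theory.
Local Open Scope ring_scope.

From mathcomp Require Import lra.
Import numFieldNormedType.Exports.

Lemma katu_mono (R : realType) (f g : R -> R) (rho a b eta k x : R) :
  (forall t : R, 0 <= t -> f t <= g t) ->
  katugampola_exists rho a eta x f -> katugampola_exists rho a eta x g ->
  katugampola rho a b eta k f x <= katugampola rho a b eta k g x.
Proof.
move=> fg If Ig; rewrite /katugampola.
apply: ler_wpM2l.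
  apply: divr_ge0; first by apply: mulr_ge0; exact: powR_ge0.
  rewrite /Gamma; apply: Rintegral_ge0 => t _.
  by apply: mulr_ge0; [exact: powR_ge0 | exact: expR_ge0].
apply: le_Rintegral => //.
move=> t /=; rewrite in_itv /= => /andP[t0 _].
rewrite /katu_integrand; apply: ler_wpM2l; last by apply: fg; exact: ltW.
by apply: divr_ge0; exact: powR_ge0.
Qed.

Theorem theorem4 (R : realType) (v u z1 z2 g1 g2 : R -> R) :
  integrable_on_halfline v -> integrable_on_halfline u ->
  integrable_on_halfline z1 -> integrable_on_halfline z2 ->
  integrable_on_halfline g1 -> integrable_on_halfline g2 ->
  (forall t : R, 0 <= t -> z1 t <= v t <= z2 t) ->
  (forall t : R, 0 <= t -> g1 t <= u t <= g2 t) ->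
  forall x alpha delta rho beta lambda eta k : R,
  0 < x -> 0 < alpha -> 0 < delta -> 0 < rho ->
  (* all the fractional integrals appearing exist *)
  (forall f, f \in [:: v; u; z1; z2; g1; g2] ->
     katugampola_exists rho alpha eta x f /\
     katugampola_exists rho delta eta x f) ->
  let A := fun f => katugampola rho alpha beta eta k f x in
  let D := fun f => katugampola rho delta lambda eta k f x in
  [/\ D u * A z2 + D g1 * A v >= D g1 * A z2 + D u * A v,
      D z1 * A u + A g2 * D v >= D z1 * A g2 + D v * A u,
      A z2 * D g2 + A v * D u >= A z2 * D u + D g2 * A v &
      A z1 * D g1 + A v * D u >= A z1 * D u + D g1 * A v].
Proof.
move=> _ _ _ _ _ _ hv hu x alpha delta rho beta lambda eta k _ _ _ _ hex A D.
have E : forall f, f \in [:: v; u; z1; z2; g1; g2] -> _ := hex.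
have [Av1 Dv1] := E v ltac:(by rewrite !inE eqxx).
have [Au1 Du1] := E u ltac:(by rewrite !inE eqxx ?orbT).
have [Az11 Dz11] := E z1 ltac:(by rewrite !inE eqxx ?orbT).
have [Az21 Dz21] := E z2 ltac:(by rewrite !inE eqxx ?orbT).
have [Ag11 Dg11] := E g1 ltac:(by rewrite !inE eqxx ?orbT).
have [Ag21 Dg21] := E g2 ltac:(by rewrite !inE eqxx ?orbT).
have h1 : forall t : R, 0 <= t -> z1 t <= v t by move=> t /hv /andP[].
have h2 : forall t : R, 0 <= t -> v t <= z2 t by move=> t /hv /andP[].
have h3 : forall t : R, 0 <= t -> g1 t <= u t by move=> t /hu /andP[].
have h4 : forall t : R, 0 <= t -> u t <= g2 t by move=> t /hu /andP[].
have a1 : A z1 <= A v by exact: katu_mono.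
have a2 : A v <= A z2 by exact: katu_mono.
have a3 : A g1 <= A u by exact: katu_mono.
have a4 : A u <= A g2 by exact: katu_mono.
have d1 : D z1 <= D v by exact: katu_mono.
have d2 : D v <= D z2 by exact: katu_mono.
have d3 : D g1 <= D u by exact: katu_mono.
have d4 : D u <= D g2 by exact: katu_mono.
split; nra.
Qed.
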